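(* Fix $d\in\mathbb{N}$ and $\varepsilon>0$. Let $a=\lceil 32/\varepsilon+2\rceil$ and $Q=\{a^{2j-1}: j\in\mathbb{N}\}\subseteq\mathbb{N}$. Then for all $m_1<\dots<m_d<k$ in $Q$ and all step preserving maps $F\colon S^+_{\ell_\infty^k}\to S^+_{\ell_1^k}$ with $\omega_F(\tfrac1d)\leq\tfrac{\varepsilon}{8}$, we have \[\Big\|F(z(\bar m))-\frac1k\sum_{i=1}^k e_i\Big\|_1\leq\varepsilon,\] where $\bar m=(m_1,\dots,m_d)$ and $(e_i)_{i=1}^k$ is the standard basis of $\mathbb{R}^k$.
   Context: For $p\in\{1,\infty\}$, $S^+_{\ell_p^k}=\{(x_i)_{i=1}^k\in\mathbb{R}^k: \|x\|_p=1,\ x_i\ge0 \text{ for all } i\}$. For $0=m_0<m_1<\dots<m_d<k$, $z(\bar m)=\sum_{s=1}^d\big(1-\frac{s-1}{d}\big)1_{(m_{s-1},m_s]}\in S^+_{\ell_\infty^k}$, where $1_{(a,b]}$ is the vector with entries $1$ at indices $i\in(a,b]$ and $0$ elsewhere. Writing $F=(F_i)_{i=1}^k$ for the coordinates, $F$ is step preserving if $x_i=x_j$ implies $F_i(x)=F_j(x)$ for all $x$ in the domain and all $i,j$. $\omega_F(t)=\sup\{\|F(x)-F(y)\|_1: \|x-y\|_\infty\le t\}$. *)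

(* Defs.v *)
From HB Require Import structures.
From mathcomp Require Import all_boot all_order all_algebra.
From mathcomp Require Import all_classical all_reals.
Set Implicit Arguments. Unset Strict Implicit. Unset Printing Implicit Defensive.
Import Order.TTheory GRing.Theory Num.Theory.
Local Open Scope ring_scope.
Local Open Scope classical_set_scope.

(* vectors of R^k are functions 'I_k -> R; coordinate i : 'I_k is the
   paper's coordinate i+1 *)
Definition norm1 (R : realType) (k : nat) (x : 'I_k -> R) : R :=
  \sum_(i < k) `|x i|.
Definition norminf (R : realType) (k : nat) (x : 'I_k -> R) : R :=
  \big[Num.max/0]_(i < k) `|x i|.

Definition vsub (R : realType) (k : nat) (x y : 'I_k -> R) : 'I_k -> R :=
  fun i => x i - y i.

Definition Splus1 (R : realType) (k : nat) : set ('I_k -> R) :=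
  [set x | norm1 x = 1 /\ forall i, 0 <= x i].
Definition SplusInf (R : realType) (k : nat) : set ('I_k -> R) :=
  [set x | norminf x = 1 /\ forall i, 0 <= x i].

Definition step_preserving (R : realType) (k : nat)
  (F : ('I_k -> R) -> ('I_k -> R)) : Prop :=
  forall x, SplusInf x -> forall i j : 'I_k, x i = x j -> F x i = F x j.

Definition omega (R : realType) (k : nat) (F : ('I_k -> R) -> ('I_k -> R))
  (t : R) : R :=
  sup [set r | exists x y, [/\ SplusInf x, SplusInf y,
        norminf (vsub x y) <= t & r = norm1 (vsub (F x) (F y))]].

(* z(m_bar) with m 0 = 0 and m_1 < ... < m_d given by m 1, ..., m d *)
Definition zvec (R : realType) (k d : nat) (m : nat -> nat) : 'I_k -> R :=
  fun i => \sum_(1 <= s < d.+1)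
     (1 - (s.-1)%:R / d%:R) * (if (m s.-1 < i.+1 <= m s)%N then 1 else 0).

Definition aeps (R : realType) (eps : R) : nat :=
  `|Num.ceil (32 / eps + 2)|%N.

Definition Qset (a : nat) : set nat :=
  [set n | exists j : nat, (1 <= j)%N /\ n = (a ^ (2 * j - 1))%N].

Definition uniform (R : realType) (k : nat) : 'I_k -> R := fun _ => 1 / k%:R.

(* Main.v *)
Require Import Defs.
From HB Require Import structures.
From mathcomp Require Import all_boot all_order all_algebra.
From mathcomp Require Import all_classical all_reals.
From mathcomp Require Import zify ring lra.
Set Implicit Arguments. Unset Strict Implicit. Unset Printing Implicit Defensive.
Import Order.TTheory GRing.Theory Num.Theory.
Local Open Scope ring_scope.
Local Open Scope classical_set_scope.

Lemma mono_m (m : nat -> nat) (d : nat) :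
  (forall s, (s < d)%N -> (m s < m s.+1)%N) ->
  forall u v, (u < v)%N -> (v <= d)%N -> (m u < m v)%N.
Proof.
move=> hinc u; elim=> [|v IH] // huv hv.
have h1 := hinc v hv.
case: (ltnP u v) => h.
  by apply: ltn_trans (IH h (ltnW hv)) h1.
have -> : u = v by lia.
exact h1.
Qed.

Lemma mono_le (m : nat -> nat) (d : nat) :
  (forall s, (s < d)%N -> (m s < m s.+1)%N) ->
  forall u v, (u <= v)%N -> (v <= d)%N -> (m u <= m v)%N.
Proof.
move=> hinc u v huv hv.
case: (ltnP u v) => h; first exact: (ltnW (mono_m hinc h hv)).
by have -> : u = v by lia.
Qed.

Definition MM (d k : nat) (m : nat -> nat) (t : nat) : nat :=
  if (t <= d)%N then m t else k.

Lemma MM_mono (d k : nat) (m : nat -> nat) :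
  (forall s, (s < d)%N -> (m s < m s.+1)%N) -> (m d < k)%N ->
  forall t, (t <= d)%N -> (MM d k m t < MM d k m t.+1)%N.
Proof.
move=> hinc hk t ht; rewrite /MM ht.
case: ifP => h.
  by apply: hinc.
by have -> : t = d by lia.
Qed.

Lemma tele (R : realType) (M : nat -> nat) (phi : nat -> R) (lo n : nat) :
  (forall t, (lo <= t < lo + n)%N -> (M t <= M t.+1)%N) ->
  (M lo <= M (lo + n)%N)%N /\
  \sum_(lo <= t < (lo + n)%N) \sum_(M t <= i < M t.+1) phi i =
  \sum_(M lo <= i < M (lo + n)%N) phi i.
Proof.
elim: n => [|n IH] h.
  rewrite !addn0; split; first exact: leqnn.
  by rewrite !big_geq.
have [IH1 IH2] : (M lo <= M (lo + n)%N)%N /\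
  \sum_(lo <= t < (lo + n)%N) \sum_(M t <= i < M t.+1) phi i =
  \sum_(M lo <= i < M (lo + n)%N) phi i.
  apply: IH => t ht; apply: h; lia.
have hn : (M (lo + n)%N <= M (lo + n)%N.+1)%N by apply: h; lia.
rewrite addnS; split; first exact: leq_trans IH1 hn.
rewrite big_nat_recr /=; last lia.
by rewrite IH2 -big_cat_nat.
Qed.

Lemma sum_nat_ge0 (R : realType) (phi : nat -> R) (a b : nat) :
  (forall i, (a <= i < b)%N -> 0 <= phi i) -> 0 <= \sum_(a <= i < b) phi i.
Proof. by move=> h; rewrite big_nat_cond; apply: sumr_ge0 => i /andP[hi _]; apply: h. Qed.

Lemma sum_nat_le (R : realType) (phi psi : nat -> R) (a b : nat) :
  (forall i, (a <= i < b)%N -> phi i <= psi i) ->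
  \sum_(a <= i < b) phi i <= \sum_(a <= i < b) psi i.
Proof.
by move=> h; rewrite big_nat_cond [X in _ <= X]big_nat_cond; apply: ler_sum => i /andP[hi _]; apply: h.
Qed.

Lemma sum_sub (R : realType) (phi : nat -> R) (k p q : nat) :
  (forall i, (i < k)%N -> 0 <= phi i) -> (p <= q)%N -> (q <= k)%N ->
  \sum_(p <= i < q) phi i <= \sum_(0 <= i < k) phi i.
Proof.
move=> h0 hpq hqk.
rewrite (@big_cat_nat _ _ _ p 0 k _ _ (leq0n p) (leq_trans hpq hqk)) /=.
rewrite (@big_cat_nat _ _ _ q p k _ _ hpq hqk) /=.
have h1 : 0 <= \sum_(0 <= i < p) phi i.
  apply: sum_nat_ge0 => i /andP[_ hi]; apply: h0; lia.
have h2 : 0 <= \sum_(q <= i < k) phi i.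
  apply: sum_nat_ge0 => i /andP[hi1 hi]; apply: h0; lia.
lra.
Qed.

Definition blk (d : nat) (m : nat -> nat) (i : nat) : nat :=
  (\sum_(1 <= t < d.+1) (m t <= i))%N.

Lemma blk_val (d k : nat) (m : nat -> nat) :
  (forall s, (s < d)%N -> (m s < m s.+1)%N) ->
  forall t i, (t <= d)%N -> (MM d k m t <= i < MM d k m t.+1)%N ->
  blk d m i = t.
Proof.
move=> hinc t i ht /andP[h1 h2].
rewrite /blk (eq_big_nat _ _ (F2 := fun s => nat_of_bool (s <= t)%N)); last first.
  move=> s /andP[hs1 hs2]; congr nat_of_bool.
  move: h1 h2; rewrite /MM ht => h1 h2.
  case: (leqP s t) => hst.
    by apply/idP; apply: leq_trans h1; apply: mono_le hinc _ _ hst ht.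
  apply/negbTE; rewrite -ltnNge.
  have ht1 : (t < d)%N by lia.
  move: h2; rewrite ht1 => h2.
  apply: leq_trans h2 _; apply: mono_le hinc _ _ hst _; lia.
have e1 : (1 <= t.+1)%N by [].
have e2 : (t.+1 <= d.+1)%N by [].
rewrite (@big_cat_nat _ _ _ t.+1 1 d.+1 _ _ e1 e2) /=.
rewrite (eq_big_nat _ _ (F2 := fun _ => 1%N)); last by move=> s /andP[_ hs]; rewrite (_ : (s <= t)%N = true) //; lia.
rewrite [X in (_ + X)%N](eq_big_nat _ _ (F2 := fun _ => 0%N)); last first.
  by move=> s /andP[hs _]; rewrite (_ : (s <= t)%N = false) //; lia.
by rewrite !sum_nat_const_nat; lia.
Qed.

Lemma blk_ex (d k : nat) (m : nat -> nat) :
  m 0%N = 0%N ->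
  forall i, (i < MM d k m d.+1)%N ->
  exists t, (t <= d)%N /\ (MM d k m t <= i < MM d k m t.+1)%N.
Proof.
move=> hm0 i.
suff : forall e, (e <= d)%N -> (i < MM d k m e.+1)%N ->
  exists t, (t <= e)%N /\ (MM d k m t <= i < MM d k m t.+1)%N.
  by move=> H hi; apply: H.
elim=> [|e IH] he hi.
  by exists 0%N; rewrite /MM /= hm0 leq0n.
case: (ltnP i (MM d k m e.+1)) => h.
  have [t [ht1 ht2]] := IH (ltnW he) h.
  by exists t; split => //; lia.
by exists e.+1; rewrite h hi.
Qed.

Lemma zvec_val (R : realType) (k d : nat) (m : nat -> nat) :
  (0 < d)%N -> (forall s, (s < d)%N -> (m s < m s.+1)%N) ->
  forall t (i : 'I_k), (t <= d)%N -> (MM d k m t <= i < MM d k m t.+1)%N ->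
  @zvec R k d m i = 1 - t%:R / d%:R.
Proof.
move=> hd hinc t i ht /andP[h1 h2].
rewrite /zvec (eq_big_nat _ _ (F2 := fun s =>
   if s == t.+1 then (1 - (s.-1)%:R / d%:R) else 0)); last first.
  move=> s /andP[hs1 hs2].
  move: h1 h2; rewrite /MM ht => h1 h2.
  case: (ltngtP s t.+1) => hst.
  - have -> : (m s.-1 < i.+1 <= m s)%N = false.
      have := mono_le hinc (_ : (s <= t)%N) ht.
      move=> hh; apply/negbTE/negP => /andP[x y]; lia.
    by rewrite mulr0.
  - have -> : (m s.-1 < i.+1 <= m s)%N = false.
      have ht1 : (t < d)%N by lia.
      move: h2; rewrite ht1 => h2.
      have := mono_le hinc (_ : (t.+1 <= s.-1)%N) (_ : (s.-1 <= d)%N).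
      move=> hh; apply/negbTE/negP => /andP[x y]; lia.
    by rewrite mulr0.
  - subst s => /=.
    have ht1 : (t < d)%N by lia.
    move: h2; rewrite ht1 => h2.
    by rewrite ltnS h1 h2 mulr1.
rewrite -big_mkcond big_nat1_eq /=.
case: (ltnP t d) => htd.
  by rewrite ltnS htd.
have -> : t = d by lia.
rewrite ltnn.
rewrite divff ?subrr // pnatr_eq0; lia.
Qed.

Lemma blk_prop (d k : nat) (m : nat -> nat) :
  m 0%N = 0%N -> (forall s, (s < d)%N -> (m s < m s.+1)%N) -> (m d < k)%N ->
  forall i, (i < k)%N ->
  (blk d m i <= d)%N /\
  (MM d k m (blk d m i) <= i < MM d k m (blk d m i).+1)%N.
Proof.
move=> hm0 hinc hk i hi.
have hi' : (i < MM d k m d.+1)%N by rewrite /MM ltnn.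
have [t [ht1 ht2]] := blk_ex hm0 hi'.
by rewrite (blk_val hinc ht1 ht2).
Qed.

Lemma zvec_blk (R : realType) (d k : nat) (m : nat -> nat) :
  (0 < d)%N -> m 0%N = 0%N -> (forall s, (s < d)%N -> (m s < m s.+1)%N) ->
  (m d < k)%N ->
  forall i : 'I_k, @zvec R k d m i = 1 - (blk d m i)%:R / d%:R.
Proof.
move=> hd hm0 hinc hk i.
have [h1 h2] := blk_prop hm0 hinc hk (ltn_ord i).
exact: zvec_val.
Qed.

Lemma norminf_eq1 (R : realType) (k : nat) (x : 'I_k -> R) (j : 'I_k) :
  (forall i, 0 <= x i <= 1) -> x j = 1 -> norminf x = 1.
Proof.
move=> h hj; apply/le_anti/andP; split.
  apply: bigmax_le => // i _.
  by have /andP[a b] := h i; rewrite ger0_norm.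
rewrite /norminf; apply: le_trans (le_bigmax _ _ j).
by rewrite hj normr1.
Qed.

Lemma norminf_le (R : realType) (k : nat) (x y : 'I_k -> R) (t : R) :
  0 <= t -> (forall i, `|x i - y i| <= t) -> norminf (vsub x y) <= t.
Proof. by move=> h0 h; apply: bigmax_le => // i _; apply: h. Qed.

Lemma omega_ge (R : realType) (k : nat) (F : ('I_k -> R) -> ('I_k -> R))
  (x y : 'I_k -> R) (t : R) :
  (forall x, SplusInf x -> Splus1 (F x)) ->
  SplusInf x -> SplusInf y -> norminf (vsub x y) <= t ->
  norm1 (vsub (F x) (F y)) <= omega F t.
Proof.
move=> hF hx hy hxy.
apply: ub_le_sup; last by exists x, y; split.
exists 2 => r [x' [y' [hx' hy' _ ->]]].
have [n1 p1] := hF _ hx'; have [n2 p2] := hF _ hy'.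
rewrite /norm1 /vsub.
apply: le_trans (_ : \sum_(i < k) (`|F x' i| + `|F y' i|) <= 2).
  by apply: ler_sum => i _; apply: ler_normB.
by rewrite big_split /= -/(norm1 (F x')) -/(norm1 (F y')) n1 n2.
Qed.

Lemma const_sum (R : realType) (phi : nat -> R) (c : R) (p q : nat) :
  (forall i, (p <= i < q)%N -> phi i = c) ->
  \sum_(p <= i < q) phi i = (q - p)%N%:R * c.
Proof.
by move=> h; rewrite (eq_big_nat _ _ (F2 := fun _ => c)) // sumr_const_nat mulr_natl.
Qed.

Ltac rlia := repeat match goal with
 | H : is_true (@Order.le _ _ _ _) |- _ => clear H
 | H : is_true (@Order.lt _ _ _ _) |- _ => clear H
 | H : @eq (GRing.Nmodule.sort _) _ _ |- _ => clear H
 end; lia.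

Lemma final (R : realType) (k d : nat) (M : nat -> nat) (f : nat -> R)
  (g : bool -> nat -> R) (a eps : R) :
  (0 < d)%N -> M 0%N = 0%N -> (forall t, (t <= d)%N -> (M t < M t.+1)%N) ->
  M d.+1 = k ->
  (forall i, (i < k)%N -> 0 <= f i) -> (forall b i, (i < k)%N -> 0 <= g b i) ->
  \sum_(0 <= i < k) f i = 1 -> (forall b, \sum_(0 <= i < k) g b i = 1) ->
  (forall b, \sum_(0 <= i < k) `|f i - g b i| <= eps / 8) ->
  (forall t, (t < d)%N -> forall i j, (M t <= i < M t.+2)%N -> (M t <= j < M t.+2)%N ->
      g (odd t.+1) i = g (odd t.+1) j) ->
  (forall t, (t.+1 < d)%N ->
      (a ^+ 2 - 1) * (M t.+1 - M t)%N%:R <= (M t.+2 - M t.+1)%N%:R) ->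
  a ^+ 2 * (M d.-1)%:R <= k%:R ->
  0 < eps -> 2 <= a -> 32 / eps <= a ->
  \sum_(0 <= i < k) `|f i - 1 / k%:R| <= eps.
Proof.
move=> hd hM0 hMs hMk hf0 hg0 hf1 hg1 hD hC hR hN heps ha2 ha.
have hinc : forall s, (s < d.+1)%N -> (M s < M s.+1)%N by move=> s hs; apply: hMs.
have Mlt : forall u v, (u < v)%N -> (v <= d.+1)%N -> (M u < M v)%N.
  by move=> u v h1 h2; apply: (mono_m hinc h1 h2).
have Mle : forall u v, (u <= v)%N -> (v <= d.+1)%N -> (M u <= M v)%N.
  by move=> u v h1 h2; apply: (mono_le hinc h1 h2).
set A := a ^+ 2 - 1.
have hA : 32 / eps <= A.
  apply: le_trans ha _; rewrite /A; nra.
have hA0 : 0 < A.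
  apply: lt_le_trans hA; apply: divr_gt0 => //.
set n0 := M d.-1.
have hn0k : (n0 <= k)%N by rewrite -hMk; apply: Mle; rlia.
have step1 : forall t, (t.+1 < d)%N ->
   A * \sum_(M t <= i < M t.+1) g (odd t.+1) i <=
   \sum_(M t.+1 <= i < M t.+2) g (odd t.+1) i.
  move=> t ht.
  have h01 := Mlt t t.+1 (ltnSn t) (_ : (t.+1 <= d.+1)%N).
  have h12 := Mlt t.+1 t.+2 (ltnSn _) (_ : (t.+2 <= d.+1)%N).
  have htk : (M t < k)%N by rewrite -hMk; apply: Mlt; rlia.
  have hc0 := hg0 (odd t.+1) _ htk.
  rewrite (const_sum (c := g (odd t.+1) (M t))); last first.
    move=> i hi; apply: hC; rlia.
  rewrite [X in _ <= X](const_sum (c := g (odd t.+1) (M t))); last first.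
    move=> i hi; apply: hC; rlia.
  rewrite mulrA; apply: ler_wpM2r => //.
  exact: hR.
set h := fun i => `|f i - g false i| + `|f i - g true i|.
set G := fun i => g false i + g true i.
have hMm : forall t, (0 <= t < (0 + d.+1)%N)%N -> (M t <= M t.+1)%N.
  by move=> t ht; apply: ltnW; apply: hMs; rlia.
have teleA : forall phi : nat -> R, \sum_(0 <= i < n0) phi i =
    \sum_(0 <= t < d.-1) \sum_(M t <= i < M t.+1) phi i.
  move=> phi.
  have hyp : forall t, (0 <= t < (0 + d.-1)%N)%N -> (M t <= M t.+1)%N.
    by move=> t ht; apply: ltnW; apply: hMs; rlia.
  have [_ ->] := @tele R M phi 0 d.-1 hyp.
  by rewrite add0n hM0.
have teleB : forall phi : nat -> R,
    \sum_(0 <= t < d.-1) \sum_(M t.+1 <= i < M t.+2) phi i =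
    \sum_(M 1 <= i < M d) phi i.
  move=> phi.
  transitivity (\sum_(1 <= t < d) \sum_(M t <= i < M t.+1) phi i);
    first by rewrite big_add1.
  have hyp : forall t, (1 <= t < (1 + d.-1)%N)%N -> (M t <= M t.+1)%N.
    by move=> t ht; apply: ltnW; apply: hMs; rlia.
  have [_ e] := @tele R M phi 1 d.-1 hyp.
  by move: e; rewrite add1n prednK.
have hD2 : \sum_(0 <= i < k) h i <= eps / 4.
  rewrite /h big_split /=.
  have := hD false; have := hD true; lra.
have hG2 : \sum_(0 <= i < k) G i = 2.
  by rewrite /G big_split /= !hg1.
have hh0 : forall i, (i < k)%N -> 0 <= h i.
  by move=> i _; rewrite /h addr_ge0.
have hG0 : forall i, (i < k)%N -> 0 <= G i.
  by move=> i hi; rewrite /G addr_ge0 // hg0.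
have step2 : A * \sum_(0 <= i < n0) f i <= A * (eps / 4) + 2.
  have e1 : A * \sum_(0 <= i < n0) f i <=
     A * \sum_(0 <= i < n0) h i + \sum_(M 1 <= i < M d) G i.
    rewrite !teleA -teleB mulr_sumr mulr_sumr -big_split /=.
    apply: sum_nat_le => t /andP[_ ht].
    have ht' : (t.+1 < d)%N by rlia.
    have hs := step1 t ht'.
    have hBk : (M t.+2 <= k)%N by rewrite -hMk; apply: Mle; rlia.
    set b := odd t.+1 in hs.
    have e2 : \sum_(M t <= i < M t.+1) f i <=
       \sum_(M t <= i < M t.+1) h i + \sum_(M t <= i < M t.+1) g b i.
      rewrite -big_split /=; apply: sum_nat_le => i hi.
      rewrite /h; case: (b); 
        have := ler_norm (f i - g b i); 
        have := normr_ge0 (f i - g false i); have := normr_ge0 (f i - g true i);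
        have := ler_norm (f i - g false i); have := ler_norm (f i - g true i); lra.
    have e3 : \sum_(M t.+1 <= i < M t.+2) g b i <= \sum_(M t.+1 <= i < M t.+2) G i.
      apply: sum_nat_le => i hi; rewrite /G.
      have hik : (i < k)%N by rlia.
      have := hg0 false i hik; have := hg0 true i hik.
      case: (b); lra.
    have hA0' := ltW hA0.
    have := ler_wpM2l hA0' e2.
    rewrite mulrDr; lra.
  have e4 : \sum_(0 <= i < n0) h i <= eps / 4.
    apply: le_trans hD2; apply: sum_sub => //; rlia.
  have e5 : \sum_(M 1 <= i < M d) G i <= 2.
    rewrite -hG2; apply: sum_sub => //.
      apply: Mle; rlia.
    rewrite -hMk; apply: Mle; rlia.
  have := ler_wpM2l (ltW hA0) e4; lra.
set X := \sum_(0 <= i < n0) f i.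
set gs := g (odd d).
have hk0 : (0 < k)%N by rewrite -hMk -hM0; apply: Mlt.
have hkR : (k%:R : R) != 0 by rewrite pnatr_eq0 -lt0n.
have hCs : forall i, (n0 <= i < k)%N -> gs i = gs n0.
  move=> i hi.
  have hd1 : (d.-1 < d)%N by rlia.
  have := hC d.-1 hd1; rewrite prednK // => H.
  apply: H; rewrite -/n0 hMk //; rewrite leqnn /=.
  rewrite -hMk; apply: Mlt; rlia.
rewrite (@big_cat_nat _ _ _ n0 0 k _ _ (leq0n _) hn0k) /=.
set u := 1 / k%:R.
have hu0 : 0 <= u by rewrite /u divr_ge0.
set N := n0%:R * u.
have e6 : \sum_(0 <= i < n0) `|f i - u| <= X + N.
  have -> : N = \sum_(0 <= i < n0) u by rewrite sumr_const_nat subn0 /N mulr_natl.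
  rewrite /X -big_split /=.
  apply: sum_nat_le => i hi.
  apply: le_trans (ler_normB _ _) _.
  rewrite ger0_norm ?(ger0_norm hu0) //; apply: hf0; rlia.
set Dc := \sum_(n0 <= i < k) `|f i - gs i|.
set Da := \sum_(0 <= i < n0) `|f i - gs i|.
have hDs : Da + Dc <= eps / 8.
  rewrite /Da /Dc -big_cat_nat //=; exact: hD.
have e7 : \sum_(n0 <= i < k) `|f i - u| <= Dc + (k - n0)%N%:R * `|gs n0 - u|.
  have -> : (k - n0)%N%:R * `|gs n0 - u| = \sum_(n0 <= i < k) `|gs n0 - u|
    by rewrite sumr_const_nat mulr_natl.
  rewrite /Dc -big_split /=.
  apply: sum_nat_le => i hi.
  rewrite -(hCs i hi); exact: ler_distD.
set S := \sum_(0 <= i < n0) gs i.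
have hS0 : 0 <= S.
  apply: sum_nat_ge0 => i hi; apply: hg0; rlia.
have e8 : (k - n0)%N%:R * gs n0 = 1 - S.
  have := hg1 (odd d).
  rewrite (@big_cat_nat _ _ _ n0 0 k _ _ (leq0n _) hn0k) /=.
  rewrite [X in _ + X](const_sum (c := gs n0)) //; rewrite -/S; lra.
have e9 : (k - n0)%N%:R * `|gs n0 - u| <= N + S.
  have hkn : (0 : R) <= (k - n0)%N%:R by [].
  rewrite -(ger0_norm hkn) -normrM mulrBr e8 natrB // mulrBl.
  rewrite /u mul1r mulfV // -/u.
  have -> : 1 - S - (1 - n0%:R / k%:R) = N - S by rewrite /N /u mul1r; lra.
  apply: le_trans (ler_normB _ _) _.
  rewrite !ger0_norm //; rewrite /N mulr_ge0 //.
have e10 : S <= X + Da.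
  rewrite /S /X /Da -big_split /=; apply: sum_nat_le => i hi.
  have := ler_norm (gs i - f i); rewrite distrC; lra.
have hE : \sum_(0 <= i < n0) `|f i - u| + \sum_(n0 <= i < k) `|f i - u|
    <= 2 * X + 2 * N + eps / 8.
  lra.
apply: le_trans hE _.
have hAe : 32 <= A * eps.
  have := ler_wpM2r (ltW heps) hA; rewrite divfK //; exact: lt0r_neq0.
have hN0 : 0 <= N by rewrite /N mulr_ge0.
have hNa : a ^+ 2 * N <= 1.
  rewrite /N mulrA /u.
  have := ler_wpM2r hu0 hN; rewrite /u mul1r mulfV //.
have hAN : A * N <= 1.
  apply: le_trans hNa; apply: ler_wpM2r => //; rewrite /A; lra.
rewrite -(ler_pM2l hA0).
have h2 := step2.
rewrite !mulrDr.
have -> : A * (2 * X) = 2 * (A * X) by ring.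
have -> : A * (2 * N) = 2 * (A * N) by ring.
have -> : A * (eps / 8) = (A * eps) / 8 by ring.
have e4 : A * (eps / 4) = (A * eps) / 4 by ring.
rewrite e4 -/X in h2.
move: h2 hAN hAe; move: (A * X) (A * N) (A * eps) => p q r.
clear; move=> *; lra.
Qed.

Lemma frac_le (R : realType) (n d : nat) :
  (0 < d)%N -> (n <= d)%N -> 0 <= 1 - (n%:R / d%:R : R) <= 1.
Proof.
move=> hd hn.
have hd' : (0 : R) < d%:R by rewrite ltr0n.
have h1 : (n%:R / d%:R : R) <= 1 by rewrite ler_pdivrMr // mul1r ler_nat.
have h2 : (0 : R) <= n%:R / d%:R by rewrite divr_ge0.
apply/andP; split; lra.
Qed.

Definition yvec (R : realType) (k d : nat) (m : nat -> nat) (b : bool) : 'I_k -> R :=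
  fun i => @zvec R k d m i +
    (if (0 < blk d m i)%N && (odd (blk d m i) == b) then 1 / d%:R else 0).

Lemma raise_eq (R : realType) (n d : nat) : (0 < n)%N ->
  1 - (n%:R / d%:R : R) + 1 / d%:R = 1 - (n.-1)%:R / d%:R.
Proof.
move=> hn; rewrite -{1}(prednK hn) -addn1 natrD mulrDl; lra.
Qed.

Lemma blk0 (d k : nat) (m : nat -> nat) :
  (0 < d)%N -> m 0%N = 0%N -> (forall s, (s < d)%N -> (m s < m s.+1)%N) ->
  blk d m 0 = 0%N.
Proof.
move=> hd hm0 hinc; apply: (blk_val (k := k) hinc (leq0n d)).
rewrite /MM /= hd hm0 /=; by have := hinc 0%N hd; rewrite hm0.
Qed.

Lemma yvec_val (R : realType) (k d : nat) (m : nat -> nat) (b : bool) :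
  (0 < d)%N -> m 0%N = 0%N -> (forall s, (s < d)%N -> (m s < m s.+1)%N) ->
  (m d < k)%N -> forall i : 'I_k,
  @yvec R k d m b i = if (0 < blk d m i)%N && (odd (blk d m i) == b)
     then 1 - (blk d m i).-1%:R / d%:R else 1 - (blk d m i)%:R / d%:R.
Proof.
move=> hd hm0 hinc hk i; rewrite /yvec (zvec_blk R hd hm0 hinc hk).
case: ifP => [/andP[h _]|_]; last by rewrite addr0.
exact: raise_eq.
Qed.

Lemma in_01 (R : realType) (k d : nat) (m : nat -> nat) (b : bool) :
  (0 < d)%N -> m 0%N = 0%N -> (forall s, (s < d)%N -> (m s < m s.+1)%N) ->
  (m d < k)%N -> forall i : 'I_k,
  0 <= @yvec R k d m b i <= 1 /\ 0 <= @zvec R k d m i <= 1.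
Proof.
move=> hd hm0 hinc hk i.
have [hb _] := blk_prop hm0 hinc hk (ltn_ord i).
rewrite (yvec_val R b hd hm0 hinc hk) (zvec_blk R hd hm0 hinc hk).
split; last exact: frac_le.
case: ifP => _; apply: frac_le => //.
exact: leq_trans (leq_pred _) hb.
Qed.

Lemma z_in (R : realType) (k d : nat) (m : nat -> nat) :
  (0 < d)%N -> m 0%N = 0%N -> (forall s, (s < d)%N -> (m s < m s.+1)%N) ->
  (m d < k)%N -> SplusInf (@zvec R k d m).
Proof.
move=> hd hm0 hinc hk.
have hk0 : (0 < k)%N by apply: leq_ltn_trans hk.
split.
  apply: (@norminf_eq1 R k _ (Ordinal hk0)).
    by move=> i; have [_ ->] := in_01 R false hd hm0 hinc hk i.
  by rewrite (zvec_blk R hd hm0 hinc hk) /= (blk0 k hd hm0 hinc) mul0r subr0.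
by move=> i; have [_ /andP[]] := in_01 R false hd hm0 hinc hk i.
Qed.

Lemma y_in (R : realType) (k d : nat) (m : nat -> nat) (b : bool) :
  (0 < d)%N -> m 0%N = 0%N -> (forall s, (s < d)%N -> (m s < m s.+1)%N) ->
  (m d < k)%N -> SplusInf (@yvec R k d m b).
Proof.
move=> hd hm0 hinc hk.
have hk0 : (0 < k)%N by apply: leq_ltn_trans hk.
split.
  apply: (@norminf_eq1 R k _ (Ordinal hk0)).
    by move=> i; have [-> _] := in_01 R b hd hm0 hinc hk i.
  by rewrite (yvec_val R b hd hm0 hinc hk) /= (blk0 k hd hm0 hinc) mul0r subr0.
by move=> i; have [/andP[h _] _] := in_01 R b hd hm0 hinc hk i.
Qed.

Lemma zy_dist (R : realType) (k d : nat) (m : nat -> nat) (b : bool) :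
  (0 < d)%N ->
  norminf (vsub (@zvec R k d m) (@yvec R k d m b)) <= 1 / d%:R.
Proof.
move=> hd; apply: norminf_le => [|i]; first by rewrite divr_ge0.
rewrite /yvec opprD addrA subrr add0r normrN.
case: ifP => _; last by rewrite normr0 divr_ge0.
by rewrite ger0_norm // divr_ge0.
Qed.

Lemma y_const (R : realType) (k d : nat) (m : nat -> nat) :
  (0 < d)%N -> m 0%N = 0%N -> (forall s, (s < d)%N -> (m s < m s.+1)%N) ->
  (m d < k)%N -> forall t, (t < d)%N -> forall i : 'I_k,
  (MM d k m t <= i < MM d k m t.+2)%N ->
  @yvec R k d m (odd t.+1) i = 1 - t%:R / d%:R.
Proof.
move=> hd hm0 hinc hk t ht i /andP[h1 h2].
rewrite (yvec_val R _ hd hm0 hinc hk).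
case: (ltnP i (MM d k m t.+1)) => h3.
  rewrite (blk_val hinc (ltnW ht) (_ : (MM d k m t <= i < MM d k m t.+1)%N)); last first.
    by rewrite h1 h3.
  case: ifP => // /andP[_ /eqP]; rewrite /= => /eqP; by case: (odd t).
rewrite (blk_val hinc ht (_ : (MM d k m t.+1 <= i < MM d k m t.+2)%N)); last first.
  by rewrite h3 h2.
by rewrite /= eqxx.
Qed.

Lemma Qratio (a x y : nat) : (1 < a)%N -> Qset a x -> Qset a y -> (x < y)%N ->
  (a ^ 2 * x <= y)%N.
Proof.
move=> ha [j [hj ->]] [j' [hj' ->]] hxy.
rewrite ltn_exp2l // in hxy.
rewrite -expnD; apply: leq_pexp2l; [lia | lia].
Qed.

Lemma aeps_ge (R : realType) (eps : R) : 0 < eps ->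
  32 / eps + 2 <= ((aeps eps)%:R : R).
Proof.
move=> he; rewrite /aeps natr_absz ger0_norm.
  exact: ceil_ge.
rewrite ceil_ge0; have : 0 < 32 / eps by rewrite divr_gt0.
lra.
Qed.

Lemma sum_ord_nat (R : realType) (k' : nat) (phi : 'I_k'.+1 -> R) :
  \sum_(i < k'.+1) phi i = \sum_(0 <= n < k'.+1) phi (inord n).
Proof. by rewrite big_mkord; apply: eq_bigr => i _; rewrite inord_val. Qed.

Theorem theorem1p5 (R : realType) (d : nat) (eps : R) :
  (1 <= d)%N -> 0 < eps ->
  forall (k : nat) (m : nat -> nat),
    m 0%N = 0%N ->
    (forall s, (s < d)%N -> (m s < m s.+1)%N) ->
    (m d < k)%N ->
    (forall s, (1 <= s <= d)%N -> Qset (aeps eps) (m s)) ->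
  forall F : ('I_k -> R) -> ('I_k -> R),
    (forall x, SplusInf x -> Splus1 (F x)) ->
    step_preserving F ->
    omega F (1 / d%:R) <= eps / 8 ->
    norm1 (vsub (F (@zvec R k d m)) (@uniform R k)) <= eps.
Proof.
move=> hd heps k m hm0 hinc hk hQ F hF hsp hom.
set a := aeps eps.
have haR := aeps_ge heps; rewrite -/a in haR.
have h32 : 0 < 32 / eps by rewrite divr_gt0.
have ha2R : (2 : R) <= a%:R by lra.
have ha2 : (1 < a)%N by rewrite -(ler_nat R); apply: le_trans ha2R; rewrite ler_nat.
case: k F hk hF hsp hom => [|k'] F hk hF hsp hom; first by [].
set k := k'.+1.
set z := @zvec R k d m.
set f := fun n => F z (inord n).
set g := fun b n => F (@yvec R k d m b) (inord n).
have hzin : SplusInf z by apply: z_in.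
have hyin : forall b, SplusInf (@yvec R k d m b) by move=> b; apply: y_in.
have hsum1 : forall x, SplusInf x -> \sum_(0 <= n < k) F x (inord n) = 1.
  move=> x hx; have [h1 h2] := hF x hx.
  rewrite -sum_ord_nat -h1 /norm1; apply: eq_bigr => i _.
  by rewrite ger0_norm.
pose M := MM d k m.
rewrite /norm1 sum_ord_nat /vsub /uniform.
apply: (@final R k d M f g a%:R eps hd).
- by rewrite /M /MM /= hm0.
- by move=> t ht; apply: MM_mono.
- by rewrite /M /MM ltnn.
- by move=> i _; rewrite /f; have [_ ->] := hF z hzin.
- by move=> b i _; rewrite /g; have [_ ->] := hF _ (hyin b).
- exact: hsum1.
- by move=> b; apply: hsum1.
- move=> b; apply: le_trans hom.
  have -> : \sum_(0 <= i < k) `|f i - g b i| = norm1 (vsub (F z) (F (@yvec R k d m b))).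
    by rewrite /norm1 sum_ord_nat.
  exact: (omega_ge hF hzin (hyin b) (zy_dist R k m b hd)).
- move=> t ht i j hi hj.
  have hinc' : forall s, (s < d.+1)%N -> (M s < M s.+1)%N.
    by move=> s hs; apply: MM_mono.
  have hM2 : (M t.+2 <= k)%N.
    have -> : k = M d.+1 by rewrite /M /MM ltnn.
    by apply: (mono_le hinc').
  have hik : (i < k)%N by case/andP: hi => _ h; exact: leq_trans h hM2.
  have hjk : (j < k)%N by case/andP: hj => _ h; exact: leq_trans h hM2.
  rewrite /g; apply: hsp; first exact: hyin.
  rewrite !(y_const R hd hm0 hinc hk ht) //.
    by rewrite inordK.
  by rewrite inordK.
- move=> t ht.
  have hq : (a ^ 2 * m t.+1 <= m t.+2)%N.
    apply: Qratio => //; [apply: hQ; lia | apply: hQ; lia | apply: hinc; lia].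
  have h0 : (m t <= m t.+1)%N by apply: ltnW; apply: hinc; lia.
  have h1 : (m t.+1 <= m t.+2)%N by apply: ltnW; apply: hinc; lia.
  have hM1 : M t.+1 = m t.+1 by rewrite /M /MM (_ : (t.+1 <= d)%N) //; lia.
  have hM0 : M t = m t by rewrite /M /MM (_ : (t <= d)%N) //; lia.
  have hM2 : M t.+2 = m t.+2 by rewrite /M /MM (_ : (t.+2 <= d)%N).
  rewrite hM0 hM1 hM2 !natrB //.
  have hqR : (a%:R ^+ 2 * (m t.+1)%:R <= (m t.+2)%:R :> R).
    by rewrite -natrX -natrM ler_nat.
  have hm0R : (0 : R) <= (m t)%:R by [].
  have hA1 : (1 : R) <= a%:R ^+ 2 by nra.
  nra.
- have -> : M d.-1 = m d.-1 by rewrite /M /MM leq_pred.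
  rewrite -natrX -natrM ler_nat.
  case: (posnP d.-1) => [->|hd1]; first by rewrite hm0 muln0.
  apply: leq_trans (ltnW hk).
  have hdd : d = d.-1.+1 by rewrite prednK.
  apply: Qratio => //.
  + apply: hQ; lia.
  + apply: hQ; lia.
  + rewrite [X in (_ < m X)%N]hdd; apply: hinc; lia.
- lra.
- lra.
- lra.
Qed.
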